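(* Let $G$ be a $d$-regular graph of order $n$ with $d\ge 4$. Then \[ f_o(L(G))\ge \frac{n}{2}-\frac12\left\lfloor \frac{n}{5}\right\rfloor\ge \frac{2n}{5}. \]
   Context: All graphs are finite and simple. An induced subgraph of a graph is called odd if every vertex of it has odd degree in it. $f_o(G)$ denotes the maximum order of an odd induced subgraph of $G$. $L(G)$ is the line graph of $G$. *)

(* Defs.v *)
From mathcomp Require Import all_boot all_order all_algebra.
Set Implicit Arguments. Unset Strict Implicit. Unset Printing Implicit Defensive.

Definition simple_graph (T : finType) (e : rel T) : Prop :=
  symmetric e /\ irreflexive e.

Definition regular (T : finType) (e : rel T) (d : nat) : Prop :=
  forall x : T, #|[set y | e x y]| = d.

Definition edges (T : finType) (e : rel T) : {set {set T}} :=
  [set A : {set T} | [exists x, exists y, e x y && (A == [set x; y])]].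

Definition line_adj (T : finType) (e : rel T) : rel {set T} :=
  fun A B => [&& A \in edges e, B \in edges e, A != B & A :&: B != set0].

Definition odd_induced (U : finType) (V : {set U}) (adj : rel U) (S : {set U}) : bool :=
  (S \subset V) && [forall v in S, odd #|[set u in S | adj v u]|].

(* f_o: maximum order of an odd induced subgraph (the empty set qualifies). *)
Definition f_o (U : finType) (V : {set U}) (adj : rel U) : nat :=
  \max_(S : {set U} | odd_induced V adj S) #|S|.

Definition f_o_line (T : finType) (e : rel T) : nat :=
  f_o (edges e) (line_adj e).

(* Main.v *)
Require Import Defs.
From mathcomp Require Import all_boot all_order all_algebra.
From mathcomp Require Import zify ring lra.
Import Order.TTheory GRing.Theory Num.Theory.
Set Implicit Arguments. Unset Strict Implicit. Unset Printing Implicit Defensive.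


Definition deg (T : finType) (F : {set {set T}}) (v : T) := #|[set A in F | v \in A]|.
Definition sdiff (U : finType) (F G : {set U}) := (F :\: G) :|: (G :\: F).

Lemma odd_card_sdiff (U : finType) (A B : {set U}) :
  odd #|sdiff A B| = odd #|A| (+) odd #|B|.
Proof.
have h1 : #|sdiff A B| = #|A :\: B| + #|B :\: A|.
  have E : (A :\: B) :&: (B :\: A) = set0.
    by apply/setP => x; rewrite !inE; case: (x \in A); case: (x \in B).
  by rewrite /sdiff -cardsUI E cards0 addn0.
rewrite h1 -(cardsID B A) -(cardsID A B) setIC !oddD.
by case: (odd #|B :&: A|); case: (odd _); case: (odd _).
Qed.

Lemma deg_sdiff (T : finType) (F G : {set {set T}}) v :
  odd (deg (sdiff F G) v) = odd (deg F v) (+) odd (deg G v).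
Proof.
rewrite /deg -odd_card_sdiff.
suff -> : [set A in sdiff F G | v \in A] =
  sdiff [set A in F | v \in A] [set A in G | v \in A] by [].
apply/setP => A; rewrite /sdiff !inE.
by case: (A \in F); case: (A \in G); case: (v \in A).
Qed.

Lemma deg_set1 (T : finType) (A : {set T}) v : deg [set A] v = (v \in A).
Proof.
rewrite /deg; case: (boolP (v \in A)) => h.
  rewrite (_ : [set B in [set A] | v \in B] = [set A]) ?cards1 //.
  by apply/setP => B; rewrite !inE; case: eqP => // ->; rewrite h.
rewrite (_ : [set B in [set A] | v \in B] = set0) ?cards0 //.
by apply/setP => B; rewrite !inE; case: eqP => // ->; rewrite (negbTE h).
Qed.

Lemma deg_set0 (T : finType) v : deg (set0 : {set {set T}}) v = 0.
Proof.
rewrite /deg (_ : [set A in (set0 : {set {set T}}) | v \in A] = set0) ?cards0 //.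
by apply/setP => B; rewrite !inE.
Qed.

Lemma sdiff_sub (U : finType) (F G H : {set U}) :
  F \subset H -> G \subset H -> sdiff F G \subset H.
Proof.
move=> /subsetP hF /subsetP hG; apply/subsetP => x; rewrite !inE.
by case/orP => /andP[_ ?]; [apply: hF | apply: hG].
Qed.

Lemma path_join (T : finType) (r : rel T) (irr : irreflexive r) :
  forall p u, path r u p -> exists2 P : {set {set T}}, P \subset edges r &
     forall v, odd (deg P v) = (v == u) (+) (v == last u p).
Proof.
elim => [|w p IH] u /=.
  by move=> _; exists set0; [apply: sub0set | move=> v; rewrite deg_set0 addbb].
case/andP => ruw pw; have [P' sP' dP'] := IH w pw.
exists (sdiff P' [set [set u; w]]).
  apply: sdiff_sub => //; apply/subsetP => A; rewrite inE => /eqP ->.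
  by rewrite inE; apply/existsP; exists u; apply/existsP; exists w; rewrite ruw eqxx.
move=> v; rewrite deg_sdiff deg_set1 dP' !inE.
have uw : u != w by apply/eqP => E; move: ruw; rewrite E irr.
rewrite oddb; case: (v =P u) => [->|vu]; first by rewrite (negbTE uw) /= addbC.
by case: (v == w); case: (v == last w p).
Qed.

Definition restr (T : finType) (r : rel T) (P : pred T) : rel T :=
  fun x y => [&& r x y, P x & P y].

Lemma path_restr (T : finType) (r : rel T) (P : pred T) x p :
  path r x p -> all P (x :: p) -> path (restr r P) x p.
Proof.
elim: p x => [|y p IH] x //= /andP[rxy pp] /and3P[Px Py Pp].
by rewrite /restr rxy Px Py /=; apply: IH => //=; rewrite Py.
Qed.

Lemma connect_restr (T : finType) (r : rel T) (P : pred T) u v :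
  (forall w, connect r u w -> P w) -> connect r u v -> connect (restr r P) u v.
Proof.
move=> hP /connectP[p pp ->]; apply/connectP; exists p => //.
apply: path_restr => //; apply/allP => w /(path_connect pp); exact: hP.
Qed.

Lemma connect_restr_sub (T : finType) (r : rel T) (P : pred T) u v :
  connect (restr r P) u v -> connect r u v.
Proof.
apply: connect_sub => x y /and3P[h _ _]; exact: connect1.
Qed.

Lemma pairing (T : finType) (r : rel T) (sr : symmetric r) (irr : irreflexive r) :
  forall S : {set T}, (forall a, a \in S -> ~~ odd #|[set v in S | connect r a v]|) ->
  exists2 F : {set {set T}}, F \subset edges r & forall v, odd (deg F v) = (v \in S).
Proof.
have csym := sym_connect_sym sr.
move=> S; have [m] := ubnP #|S|; elim: m S => // m IH S ltS hS.
case: (set_0Vmem S) => [->|[a aS]].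
  by exists set0; [apply: sub0set | move=> v; rewrite deg_set0 inE].
pose Ca := [set v in S | connect r a v].
have aCa : a \in Ca by rewrite inE aS connect0.
have [c cCa ca] : exists2 c, c \in Ca & c != a.
  have := hS a aS; rewrite -/Ca (cardsD1 a Ca) aCa /=.
  case: (set_0Vmem (Ca :\ a)) => [->|[c]]; first by rewrite cards0.
  by rewrite in_setD1 => /andP[ca cC] _; exists c.
move: (cCa); rewrite inE => /andP[cS /connectP[p pp pc]].
have cac : connect r a c by apply/connectP; exists p.
have [P sP dP] := path_join irr pp.
pose S' := S :\: [set a; c].
have ltS' : #|S'| < m.
  rewrite -ltnS; apply: leq_trans ltS; rewrite ltnS; apply: proper_card; apply/properP; split; first by apply: subsetDl.
  by exists a => //; rewrite !inE eqxx.
have hS' : forall a', a' \in S' -> ~~ odd #|[set v in S' | connect r a' v]|.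
  move=> a' a'S'; have a'S : a' \in S by move: a'S'; rewrite inE => /andP[].
  pose Q := [set v in S | connect r a' v].
  have E1 : [set v in S' | connect r a' v] = Q :\: [set a; c].
    apply/setP => v; rewrite !inE.
    by case: (v \in S); case: (v == a); case: (v == c); case: (connect r a' v).
  have E2 : ~~ odd #|Q :&: [set a; c]|.
    case: (boolP (connect r a' a)) => ca'.
      rewrite (_ : Q :&: [set a; c] = [set a; c]) ?cards2 ?(eq_sym a c) ?ca //.
      apply/setP => v; rewrite !inE; case: (v =P a) => [->|_]; first by rewrite aS ca'.
      case: (v =P c) => [->|_]; last by rewrite andbF.
      by rewrite cS (connect_trans ca' cac).
    rewrite (_ : Q :&: [set a; c] = set0) ?cards0 //.
    apply/setP => v; rewrite !inE; case: (v =P a) => [->|_]; first by rewrite (negbTE ca') andbF.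
    case: (v =P c) => [->|_]; last by rewrite andbF.
    case: (boolP (connect r a' c)) => h; last by rewrite andbF.
    by move: ca'; rewrite (connect_trans h _) // csym.
  rewrite E1; move: (hS a' a'S) E2; rewrite -/Q -(cardsID [set a; c] Q) oddD.
  by case: (odd _); case: (odd _).
have [F' sF' dF'] := IH S' ltS' hS'.
exists (sdiff F' P); first exact: sdiff_sub.
move=> v; rewrite deg_sdiff dF' dP -pc !inE.
case: (v =P a) => [->|_]; first by rewrite eq_sym (negbTE ca) aS.
by case: (v =P c) => [->|_]; [rewrite cS | rewrite /= addbF].
Qed.

Lemma noncut (T : finType) (r : rel T) (sr : symmetric r) (X : {set T}) (rho : T) :
  rho \notin X ->
  (forall w, connect r rho w -> w \notin X ->
     (forall w', r w w' -> w' \in X) /\ (forall z, exists2 w', r w w' & w' != z)) ->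
  exists2 dd, (dd \in X) && connect r rho dd &
    forall u, connect r rho u -> u != dd -> connect (restr r (predC1 dd)) rho u.
Proof.
move=> rhoX hY.
have csym := sym_connect_sym sr.
pose rd z := restr r (predC1 z).
have rd_sym z : symmetric (rd z).
  by move=> x y; rewrite /rd /restr sr; case: (r y x) => //=; apply: andbC.
have cdsym z := sym_connect_sym (rd_sym z).
have rd_ne z x y : connect (rd z) x y -> x != z -> y != z.
  move=> cxy xz.
  have cl : closed (rd z) (predC1 z).
    by move=> x1 y1 /and3P[_ h1 h2]; rewrite !inE; move: h1 h2; rewrite /= => -> ->.
  by have := closed_connect cl cxy; rewrite !inE xz => <-.
pose R z := [set w | connect (rd z) rho w].
have [x0 rx0 _] := (hY rho (connect0 _ _) rhoX).2 rho.
have x0X : x0 \in X := (hY rho (connect0 _ _) rhoX).1 x0 rx0.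
have Px0 : (x0 \in X) && connect r rho x0 by rewrite x0X connect1.
case: (@arg_maxnP _ x0 (fun z => (z \in X) && connect r rho z) (fun z => #|R z|) Px0) => dd /andP[ddX ddC] ddmax.
exists dd; first by rewrite ddX ddC.
move=> u cu ud; case: (boolP (connect (rd dd) rho u)) => // nu; exfalso.
have [d' [d'X d'd cud']] : exists d', [/\ d' \in X, d' != dd & connect (rd dd) u d'].
  case: (boolP (u \in X)) => uX; first by exists u; rewrite ?connect0.
  have [h1 h2] := hY u cu uX; have [w' ruw' w'd] := h2 dd.
  exists w'; split => //; first exact: h1.
  by apply: connect1; rewrite /rd /restr ruw' /= ud w'd.
have d'R : ~~ connect (rd dd) rho d'.
  by apply: contra nu => h; apply: connect_trans h _; rewrite cdsym.
have d'C : connect r rho d'.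
  by apply: connect_trans cu _; exact: connect_restr_sub cud'.
have sub : forall w, connect (rd dd) rho w -> connect (rd d') rho w.
  move=> w cw.
  have h : connect (restr (rd dd) (predC1 d')) rho w.
    apply: connect_restr cw => w'' cw''; rewrite /= ; apply: contraNneq d'R => <-//.
  apply: connect_sub h => x y /and3P[/and3P[rxy _ _] xd yd].
  by apply: connect1; rewrite /rd /restr rxy xd yd.
have rhodd : rho != dd by apply: contraNneq rhoX => ->.
have ddnR : ~~ connect (rd dd) rho dd.
  by apply/negP => h; have := rd_ne _ _ _ h rhodd; rewrite eqxx.
have [w rdw wR] : exists2 w, r dd w & connect (rd dd) rho w.
  case: (boolP [exists w, r dd w && connect (rd dd) rho w]).
    by case/existsP => w /andP[]; exists w.
  move=> none; exfalso.
  pose Q := [pred w | connect (rd dd) rho w].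
  have cl : closed r Q.
    have step x y : r x y -> connect (rd dd) rho x -> connect (rd dd) rho y.
      move=> rxy cx; have xd : x != dd := rd_ne _ _ _ cx rhodd.
      have yd : y != dd.
        apply/negP => /eqP yd; move: none; rewrite negb_exists => /forallP /(_ x).
        have rdx : r dd x by rewrite -yd sr.
        by rewrite rdx cx.
      by apply: connect_trans cx (connect1 _); rewrite /rd /restr rxy /= xd yd.
    move=> x y rxy; rewrite /Q /=; apply/idP/idP; first exact: step.
    by apply: step; rewrite sr.
  have := closed_connect cl ddC; rewrite !inE /= connect0.
  by move=> h; move: ddnR; rewrite -h.
have wR' : connect (rd d') rho w := sub w wR.
have wd' : w != d' by apply: contraNneq d'R => <-.
have ddd' : dd != d' by rewrite eq_sym.
have ddR' : connect (rd d') rho dd.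
  by apply: connect_trans wR' (connect1 _); rewrite /rd /restr sr rdw /= wd' ddd'.
have lt : #|R dd| < #|R d'|.
  have s : dd |: R dd \subset R d'.
    apply/subsetP => x; rewrite !inE => /orP[/eqP->|]; first exact: ddR'.
    exact: sub.
  by have := subset_leq_card s; rewrite cardsU1 inE (negbTE ddnR).
have := ddmax d'; rewrite d'X d'C => /(_ isT) h.
by move: (leq_trans lt h); rewrite ltnn.
Qed.

Lemma restr_sym (T : finType) (r : rel T) (P : pred T) :
  symmetric r -> symmetric (restr r P).
Proof. by move=> sr x y; rewrite /restr sr; case: (r y x) => //=; apply: andbC. Qed.

Lemma connect_restr_P (T : finType) (r : rel T) (P : pred T) x y :
  connect (restr r P) x y -> P x -> P y.
Proof.
move=> cxy Px.
have cl : closed (restr r P) P.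
  by move=> x1 y1 /and3P[_ h1 h2]; rewrite !unfold_in h1 h2.
by have := closed_connect cl cxy; rewrite !unfold_in Px => <-.
Qed.

Lemma card_sum (U : finType) (A : {set U}) (P : pred U) :
  #|[set x in A | P x]| = \sum_(x in A) (P x : nat).
Proof.
rewrite -sum1_card big_mkcond [RHS]big_mkcond /=.
by apply: eq_bigr => x _; rewrite !inE; case: (x \in A); case: (P x).
Qed.

Lemma pair_eq (T : finType) (u v x y : T) :
  x \in [set u; v] -> y \in [set u; v] -> x != y -> [set u; v] = [set x; y].
Proof.
rewrite !inE => /orP[/eqP->|/eqP->] /orP[/eqP->|/eqP->]; rewrite ?eqxx // => _.
exact: setUC.
Qed.

Lemma line_count (T : finType) (e : rel T) (F : {set {set T}}) x y :
  F \subset edges e -> [set x; y] \in F -> x != y ->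
  #|[set B in F | line_adj e [set x; y] B]| + 2 = deg F x + deg F y.
Proof.
move=> /subsetP sF AF xy; set A := [set x; y].
pose Fx := [set B in F | x \in B]; pose Fy := [set B in F | y \in B].
have E1 : [set B in F | line_adj e A B] = (Fx :|: Fy) :\ A.
  apply/setP => B; rewrite !inE /line_adj.
  case: (boolP (B \in F)) => BF; last by rewrite !andbF.
  rewrite (sF _ AF) (sF _ BF) /= eq_sym.
  congr (_ && _).
  apply/set0Pn/orP.
    by case=> w; rewrite !inE => /andP[/orP[/eqP->|/eqP->] wB]; [left|right].
  by case=> h; [exists x | exists y]; rewrite !inE eqxx h ?orbT.
have E2 : Fx :&: Fy = [set A].
  apply/setP => B; rewrite !inE.
  case: (B =P A) => [->|nBA]; first by rewrite AF !inE !eqxx ?orbT.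
  apply/negP => /andP[/andP[BF xB] /andP[_ yB]]; apply: nBA.
  have := sF _ BF; rewrite inE => /existsP[u /existsP[v /andP[_ /eqP BE]]].
  by rewrite BE; apply: pair_eq; rewrite -?BE.
have := cardsUI Fx Fy; rewrite E2 cards1 (cardsD1 A (Fx :|: Fy)) -E1.
rewrite !inE AF !eqxx /= /deg -/Fx -/Fy. set k := #|[set B in F | line_adj e A B]|; by move=> /= h; rewrite -h addn2 add1n addn1.
Qed.

Lemma max_indep (T : finType) (e : rel T) (se : symmetric e) (ie : irreflexive e) :
  exists Y : {set T}, (forall x y, x \in Y -> y \in Y -> ~~ e x y) /\
     (forall x, x \notin Y -> exists2 y, y \in Y & e x y).
Proof.
pose indep (Z : {set T}) := [forall x in Z, forall y in Z, ~~ e x y].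
have i0 : indep set0 by apply/forall_inP => x; rewrite inE.
case: (@arg_maxnP _ set0 indep (fun Z => #|Z|) i0) => Y iY Ymax.
exists Y; split.
  by move=> x y xY yY; move/forall_inP: iY => /(_ x xY) /forall_inP /(_ y yY).
move=> x xY; case: (boolP [exists y in Y, e x y]) => [/exists_inP[y yY exy]|none].
  by exists y.
exfalso.
have i1 : indep (x |: Y).
  apply/forall_inP => u; rewrite !inE => /orP[/eqP->|uY];
    apply/forall_inP => v; rewrite !inE => /orP[/eqP->|vY].
  - by rewrite ie.
  - by apply: contra none => h; apply/exists_inP; exists v.
  - by apply: contra none => h; apply/exists_inP; exists u => //; rewrite se.
  - by move/forall_inP: iY => /(_ u uY) /forall_inP /(_ v vY).
by have := Ymax _ i1; rewrite cardsU1 xY add1n /= ltnn.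
Qed.

Lemma indep_le (T : finType) (e : rel T) (se : symmetric e) d (reg : regular e d)
  (d0 : 0 < d) (Y : {set T}) :
  (forall x y, x \in Y -> y \in Y -> ~~ e x y) -> #|Y| <= #|~: Y|.
Proof.
move=> ind.
have h1 : forall y, y \in Y -> d = \sum_(x in ~: Y) (e y x : nat).
  move=> y yY; rewrite -(reg y) -(card_sum (~: Y) (fun x => e y x)).
  apply: eq_card => x; rewrite !inE.
  case: (boolP (e y x)) => exy; rewrite ?andbF ?andbT //.
  by apply/esym/negP => xY; move: (ind _ _ yY xY); rewrite exy.
have h2 : forall x, \sum_(y in Y) (e y x : nat) <= d.
  move=> x; rewrite -(reg x) -(card_sum Y (fun y => e y x)).
  by apply: subset_leq_card; apply/subsetP => y; rewrite !inE se => /andP[].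
have E : \sum_(y in Y) d = \sum_(y in Y) \sum_(x in ~: Y) (e y x : nat).
  by apply: eq_bigr => y yY; rewrite -h1.
rewrite sum_nat_const exchange_big /= in E.
have : #|Y| * d <= #|~: Y| * d.
  rewrite E -sum_nat_const; apply: leq_sum => x _; exact: h2.
by rewrite leq_pmul2r.
Qed.

Lemma main_nat (T : finType) (e : rel T) (d : nat) :
  simple_graph e -> regular e d -> 4 <= d -> 2 * #|T| <= 5 * f_o_line e.
Proof.
move=> [se ie] reg d4.
have [Y [ind maxY]] := max_indep se ie.
pose X := ~: Y.
have XY : #|Y| <= #|X| := indep_le se reg (leq_trans (isT : 0 < 4) d4) ind.
pose b := fun u v => e u v && ((u \in Y) || (v \in Y)).
have sb : symmetric b by move=> u v; rewrite /b se orbC.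
have ib : irreflexive b by move=> u; rewrite /b ie.
have csym := sym_connect_sym sb.
pose comp v := [set w | connect b v w].
have comp_eq : forall u v, connect b u v -> comp u = comp v.
  move=> u v cuv; apply/setP => w; rewrite !inE; apply/idP/idP => h.
    by apply: connect_trans h; rewrite csym.
  exact: connect_trans cuv h.
have nbX : forall y w, y \in Y -> e y w -> w \in X.
  move=> y w yY eyw; rewrite inE; apply/negP => wY.
  by move: (ind _ _ yY wY); rewrite eyw.
pose noncutp (C : {set T}) (z : T) := [&& z \in X, z \in C &
  [forall u in C, forall v in C, (u != z) && (v != z) ==> connect (restr b (predC1 z)) u v]].
have ex_nc : forall a, a \in X -> exists z, noncutp (comp a) z.
  move=> a aX.
  have [rho rhoY erho] : exists2 rho, rho \in Y & e a rho by apply: maxY; rewrite inE in aX.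
  have crho : connect b a rho by apply: connect1; rewrite /b erho rhoY orbT.
  have rhoX : rho \notin X by rewrite inE negbK.
  have hyp : forall w, connect b rho w -> w \notin X ->
      (forall w', b w w' -> w' \in X) /\ (forall z, exists2 w', b w w' & w' != z).
    move=> w _; rewrite inE negbK => wY; split.
      by move=> w' /andP[ew _]; apply: nbX ew.
    move=> z; have : 0 < #|[set w' | e w w'] :\ z|.
      have := cardsD1 z [set w' | e w w']; rewrite reg; case: (z \in _) => /=; lia.
    case/card_gt0P => w'; rewrite !inE => /andP[w'z ew'].
    by exists w' => //; rewrite /b ew' wY.
  have [dd /andP[ddX ddC] hd] := noncut sb rhoX hyp.
  exists dd; rewrite /noncutp ddX /=.
  have Ca : comp a = comp rho := comp_eq _ _ crho.
  rewrite Ca inE ddC /=.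
  apply/forall_inP => u; rewrite inE => cu; apply/forall_inP => v; rewrite inE => cv.
  apply/implyP => /andP[ud vd].
  have hu := hd u cu ud; have hv := hd v cv vd.
  apply: connect_trans hv; by rewrite (sym_connect_sym (restr_sym _ sb)).
pose D := [set z | (z \in X) && odd #|X :&: comp z| &&
                   ([pick z' | noncutp (comp z) z'] == Some z)].
have DX : D \subset X by apply/subsetP => z; rewrite inE => /andP[/andP[]].
have Dpick : forall z, z \in D -> [pick z' | noncutp (comp z) z'] = Some z.
  by move=> z; rewrite inE => /andP[_ /eqP].
have Dcomp : forall z z', z \in D -> z' \in D -> connect b z z' -> z = z'.
  move=> z z' zD z'D czz'; have := Dpick _ zD.
  by rewrite (comp_eq _ _ czz') (Dpick _ z'D); case.
have Dodd : forall z, z \in D -> odd #|X :&: comp z|.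
  by move=> z; rewrite inE => /andP[/andP[]].
have pickD : forall a, a \in X -> odd #|X :&: comp a| ->
    exists z, [/\ z \in D, connect b a z & noncutp (comp a) z].
  move=> a aX oa.
  have [z nz hp] : exists2 z, noncutp (comp a) z & [pick z' | noncutp (comp a) z'] = Some z.
    case: pickP => [z nz|none]; first by exists z.
    by have [z] := ex_nc a aX; rewrite none.
  have nz' := nz; move/and3P: nz' => [zX zC _].
  have caz : connect b a z by move: zC; rewrite inE.
  exists z; split => //.
  by rewrite inE zX -(comp_eq _ _ caz) oa hp eqxx.
clearbody D.
pose S := X :\: D.
pose bD := restr b (fun v => v \notin D).
have inS : forall v, (v \in S) = (v \notin D) && (v \notin Y) by move=> v; rewrite !inE.
have even_comp : forall a, a \in S -> ~~ odd #|[set v in S | connect bD a v]|.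
  move=> a aS; have aX : a \in X by move: aS; rewrite inE => /andP[].
  have aD : a \notin D by move: aS; rewrite inE => /andP[].
  have E : [set v in S | connect bD a v] = (X :&: comp a) :\: D.
    apply/setP => v; rewrite !inE.
    case: (boolP (v \in D)) => vD //=; case: (boolP (v \in Y)) => vY //=.
    apply/idP/idP; first exact: connect_restr_sub.
    move=> cav.
    case: (boolP (odd #|X :&: comp a|)) => oa.
      have [z [zD caz nz]] := pickD a aX oa.
      have az : a != z by apply: contraNneq aD => ->.
      have vz : v != z by apply: contraNneq vD => ->.
      have h : connect (restr b (predC1 z)) a v.
        move/and3P: nz => [_ _ /forall_inP /(_ a)].
        rewrite inE connect0 => /(_ isT) /forall_inP /(_ v).
        by rewrite inE cav az vz => /(_ isT) /implyP; apply.
      have h2 : forall w, connect (restr b (predC1 z)) a w -> w \notin D.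
        move=> w cw; have wz : w != z := connect_restr_P cw az.
        have caw : connect b a w := connect_restr_sub cw.
        apply/negP => wD; move/eqP: wz; apply.
        apply: Dcomp => //; apply: connect_trans caz; by rewrite csym.
      apply: connect_sub (connect_restr h2 h) => x y /and3P[/and3P[bxy _ _] xD yD].
      by apply: connect1; rewrite /bD /restr bxy xD yD.
    apply: connect_restr cav => w caw; apply/negP => wD.
    by move: oa; rewrite (comp_eq _ _ caw) Dodd.
  rewrite E; have := cardsID D (X :&: comp a).
  case: (boolP (odd #|X :&: comp a|)) => oa.
    have [z [zD caz _]] := pickD a aX oa.
    have -> : (X :&: comp a) :&: D = [set z].
      apply/setP => w; rewrite !inE; apply/idP/idP.
        move=> /andP[/andP[_ caw] wD]; apply/eqP; apply: Dcomp => //.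
        by apply: connect_trans caz; rewrite csym.
      move/eqP => ->; rewrite zD caz andbT.
      by rewrite andbT; have := subsetP DX z zD; rewrite inE.
    rewrite cards1 => h; by move: oa; rewrite -h add1n /=.
  have -> : (X :&: comp a) :&: D = set0.
    apply/setP => w; rewrite !inE; apply/negP => /andP[/andP[_ caw] wD].
    by move: oa; rewrite (comp_eq _ _ caw) Dodd.
  by rewrite cards0 add0n => ->.
have sbD : symmetric bD := restr_sym _ sb.
have ibD : irreflexive bD by move=> u; rewrite /bD /restr ib.
have [F sF dF] := pairing sbD ibD even_comp.
have Fedge : forall A, A \in F ->
    exists u, exists v, [/\ A = [set u; v], e u v, u \in Y, v \in S & u != v].
  move=> A AF; have := subsetP sF A AF; rewrite inE.
  move=> /existsP[u /existsP[v /andP[buv /eqP AE]]].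
  move: buv => /and3P[/andP[euv uYvY] uD vD].
  have uv : u != v by apply/eqP => E; move: euv; rewrite E ie.
  case/orP: uYvY => [uY|vY].
    exists u, v; split => //; rewrite inS vD /=.
    by have := nbX u v uY euv; rewrite inE.
  exists v, u; split => //; [by rewrite AE setUC | by rewrite se | | by rewrite eq_sym].
  rewrite inS uD /=; have := nbX v u vY; rewrite se => /(_ euv); by rewrite inE.
have sFe : F \subset edges e.
  apply/subsetP => A AF; have [u [v [AE euv _ _ _]]] := Fedge A AF.
  by rewrite inE; apply/existsP; exists u; apply/existsP; exists v; rewrite euv AE eqxx.
have oi : odd_induced (edges e) (line_adj e) F.
  rewrite /odd_induced sFe /=; apply/forall_inP => A AF.
  have [u [v [AE euv uY vS uv]]] := Fedge A AF.
  have AF' : [set u; v] \in F by rewrite -AE.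
  have h := line_count sFe AF' uv.
  have : odd (#|[set B in F | line_adj e [set u; v] B]| + 2) = odd (deg F u + deg F v).
    by rewrite h.
  rewrite AE oddD /= addbF => ->; rewrite oddD !dF vS inS uY andbF.
  done.
have SF : #|S| <= #|F|.
  pose g x := odflt set0 [pick A in F | x \in A].
  have gP : forall x, x \in S -> g x \in F /\ x \in g x.
    move=> x xS; have : 0 < deg F x by have := dF x; rewrite xS; case: (deg F x).
    rewrite /deg card_gt0 => /set0Pn[A]; rewrite inE => /andP[AF xA].
    rewrite /g; case: pickP => [A' /andP[A'F xA']|none] //=.
    by move: (none A); rewrite AF xA.
  have ginj : {in S &, injective g}.
    move=> x x' xS x'S gxx'.
    have [gF xg] := gP x xS; have [_ x'g] := gP x' x'S; rewrite -gxx' in x'g.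
    have [u [v [AE euv uY vS uv]]] := Fedge _ gF.
    have xu : x != u by apply: contraTneq xS => ->; rewrite inS uY andbF.
    have x'u : x' != u by apply: contraTneq x'S => ->; rewrite inS uY andbF.
    move: xg x'g; rewrite AE !inE (negbTE xu) (negbTE x'u) /=.
    by move=> /eqP -> /eqP ->.
  rewrite -(card_in_imset ginj); apply: subset_leq_card.
  by apply/subsetP => A /imsetP[x xS ->]; exact: (gP x xS).1.
have Dbig : forall z, z \in D -> 5 <= #|X :&: comp z|.
  move=> z zD; have zX : z \in X := subsetP DX z zD.
  have [y yY ezy] : exists2 y, y \in Y & e z y by apply: maxY; rewrite inE in zX.
  have h : d <= #|X :&: comp z|.
    rewrite -(reg y); apply: subset_leq_card; apply/subsetP => w; rewrite !inE => eyw.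
    have := nbX y w yY eyw; rewrite inE => -> /=.
    apply: (@connect_trans _ _ y); apply: connect1; first by rewrite /b ezy yY orbT.
    by rewrite /b eyw yY.
  have o := Dodd z zD.
  have : 4 <= #|X :&: comp z| by apply: leq_trans d4 h.
  rewrite leq_eqVlt => /orP[/eqP E|//]; by move: o; rewrite -E.
have DXcard : 5 * #|D| <= #|X|.
  have h1 : \sum_(z in D) 5 <= \sum_(z in D) #|X :&: comp z| by apply: leq_sum.
  rewrite sum_nat_const mulnC in h1; apply: leq_trans h1 _.
  have cs : forall z, #|X :&: comp z| = \sum_(w in X) (connect b z w : nat).
    move=> z; rewrite -(card_sum X (fun w => connect b z w)).
    by apply: eq_card => w; rewrite !inE.
  under eq_bigr do rewrite cs.
  rewrite exchange_big /= -[#|X|]sum1_card; apply: leq_sum => w wX.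
  rewrite -(card_sum D (fun z => connect b z w)).
  apply/card_le1_eqP => z z'; rewrite !inE => /andP[zD czw] /andP[z'D cz'w].
  apply: (Dcomp z' z) => //; apply: connect_trans cz'w _; by rewrite csym.
have fF : #|F| <= f_o_line e.
  by rewrite /f_o_line /f_o; apply: leq_bigmax_cond.
have cS : #|X :&: D| + #|S| = #|X| := cardsID D X.
have XD : X :&: D = D by apply/setIidPr.
rewrite XD in cS.
have nT := cardsC Y.
rewrite -/X in nT; lia.
Qed.

Local Open Scope ring_scope.

Theorem mainTheorem10 (T : finType) (e : rel T) (d : nat) :
  simple_graph e -> regular e d -> (4 <= d)%N ->
  let n := #|T| in
  (n%:R / 2 - (n %/ 5)%:R / 2 <= (f_o_line e)%:R :> rat) /\
  (2 * n%:R / 5 <= n%:R / 2 - (n %/ 5)%:R / 2 :> rat).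
Proof.
move=> sg reg d4 /=.
have h := main_nat sg reg d4.
set n := #|T| in h *.
set f := f_o_line e in h *.
have key : (n <= 2 * f + n %/ 5)%N.
  have := ltn_pmod n (isT : (0 < 5)%N); have := divn_eq n 5; lia.
have q5 : (5 * (n %/ 5) <= n)%N by rewrite mulnC leq_trunc_div.
split.
  have : (n%:R <= (2 * f + n %/ 5)%:R :> rat) by rewrite ler_nat.
  rewrite natrD natrM; lra.
have : ((5 * (n %/ 5))%:R <= n%:R :> rat) by rewrite ler_nat.
rewrite natrM; lra.
Qed.
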